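(* Let $\rho_{ABC}\in M_2(\mathbb{C})\otimes M_2(\mathbb{C})\otimes M_d(\mathbb{C})$ be a state with $\mathrm{rank}(\rho_{ABC})=2$. Let $\{M_{a|0}\}_{a=0}^1$ and $\{M_{a|1}\}_{a=0}^1$ be POVMs on subsystem $A$, and assume that for both $a\in\{0,1\}$ the operator $\rho_{a|0}=\mathrm{Tr}_A\big((M_{a|0}\otimes\mathbb{1}\otimes\mathbb{1})\rho_{ABC}\big)$ on $\mathbb{C}^2\otimes\mathbb{C}^d$ (systems $B,C$) has rank one and is (proportional to the projector onto) an entangled vector. Then there exist projective measurements $\{Q_{b|0}\}_{b=0}^1,\{Q_{b|1}\}_{b=0}^1$ on subsystem $B$ such that the assemblage $\Sigma=\{\sigma_{ab|xy}\}$, $\sigma_{ab|xy}=\mathrm{Tr}_{AB}\big((M_{a|x}\otimes Q_{b|y}\otimes\mathbb{1})\rho_{ABC}\big)$ ($a,b,x,y\in\{0,1\}$), is on the edge of the set of no-signaling assemblages.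
   Context: Scenario with two untrusted parties, binary outcomes $a,b\in\{0,1\}$ and binary settings $x,y\in\{0,1\}$, trusted system $\mathbb{C}^d$. A no-signaling assemblage is a collection of positive semidefinite operators $\sigma_{ab|xy}$ on $\mathbb{C}^d$ with $\sum_{a,b}\sigma_{ab|xy}=\rho$ independent of $x,y$ and of trace one, $\sum_b\sigma_{ab|xy}$ independent of $y$, and $\sum_a\sigma_{ab|xy}$ independent of $x$. An LHS assemblage is one of the form $\sigma_{ab|xy}=\sum_j q_j p_j(a|x)p'_j(b|y)\rho_j$ with probability weights $q_j$, density operators $\rho_j$ and conditional probability distributions $p_j,p'_j$. A no-signaling assemblage $\Sigma$ is on the edge if whenever $\Sigma=\epsilon\Sigma_1+(1-\epsilon)\Sigma_2$ with $\epsilon\in[0,1]$, $\Sigma_1$ LHS and $\Sigma_2$ no-signaling, necessarily $\epsilon=0$. *)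

(* Defs.v *)
(* Complex scalars: an arbitrary numClosedFieldType C
   (e.g. algC, or complex R for R real closed / R = the reals). *)
From mathcomp Require Import all_boot all_order all_algebra.
From mathcomp Require Export mxtens.
Set Implicit Arguments. Unset Strict Implicit. Unset Printing Implicit Defensive.
Import Order.TTheory GRing.Theory Num.Theory.
Local Open Scope ring_scope.

Section Q.
Variable C : numClosedFieldType.

Definition dagger m n (A : 'M[C]_(m, n)) : 'M[C]_(n, m) := map_mx Num.conj A^T.

Definition psd n (A : 'M[C]_n) : Prop :=
  A = dagger A /\ forall v : 'cV[C]_n, 0 <= (dagger v *m A *m v) 0 0.

Definition density n (A : 'M[C]_n) : Prop := psd A /\ \tr A = 1.

Definition povm n (E : 'I_2 -> 'M[C]_n) : Prop :=
  (forall a, psd (E a)) /\ \sum_(a < 2) E a = 1%:M.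

Definition projective_meas n (E : 'I_2 -> 'M[C]_n) : Prop :=
  povm E /\ forall a, E a *m E a = E a.

Definition ptrace1 m n (X : 'M[C]_(m * n)) : 'M[C]_n :=
  \matrix_(i, j) \sum_(k < m) X (mxtens_index (k, i)) (mxtens_index (k, j)).

Definition entangled m n (psi : 'cV[C]_(m * n)) : Prop :=
  ~ exists (u : 'cV[C]_m) (v : 'cV[C]_n), psi = u *t v.

(* assemblages: S a b x y = sigma_{ab|xy} *)
Definition assemblage d := 'I_2 -> 'I_2 -> 'I_2 -> 'I_2 -> 'M[C]_d.

Definition no_signaling d (S : assemblage d) : Prop :=
  (forall a b x y, psd (S a b x y)) /\
  (exists rho : 'M[C]_d, \tr rho = 1 /\
     forall x y, \sum_(a < 2) \sum_(b < 2) S a b x y = rho) /\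
  (forall a x y y', \sum_(b < 2) S a b x y = \sum_(b < 2) S a b x y') /\
  (forall b x x' y, \sum_(a < 2) S a b x y = \sum_(a < 2) S a b x' y).

(* conditional probability distribution p(a|x), written p a x *)
Definition cond_prob (p : 'I_2 -> 'I_2 -> C) : Prop :=
  (forall a x, 0 <= p a x) /\ forall x, \sum_(a < 2) p a x = 1.

Definition LHS d (S : assemblage d) : Prop :=
  exists (N : nat) (q : 'I_N -> C) (p p' : 'I_N -> 'I_2 -> 'I_2 -> C)
         (r : 'I_N -> 'M[C]_d),
    (forall j, 0 <= q j) /\ \sum_(j < N) q j = 1 /\
    (forall j, cond_prob (p j)) /\ (forall j, cond_prob (p' j)) /\
    (forall j, density (r j)) /\
    forall a b x y, S a b x y = \sum_(j < N) (q j * p j a x * p' j b y) *: r j.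

Definition on_edge d (S : assemblage d) : Prop :=
  no_signaling S /\
  forall (eps : C) (S1 S2 : assemblage d),
    0 <= eps <= 1 -> LHS S1 -> no_signaling S2 ->
    (forall a b x y, S a b x y = eps *: S1 a b x y + (1 - eps) *: S2 a b x y) ->
    eps = 0.

End Q.

(* Main.v *)
Require Import Defs.
From mathcomp Require Import all_boot all_order all_algebra.
From mathcomp Require Import mxtens.
From mathcomp Require Import ring.
Import GRing.Theory Num.Theory.
Local Open Scope ring_scope.

Set Implicit Arguments. Unset Strict Implicit. Unset Printing Implicit Defensive.
Import Order.TTheory.

Section Aux.
Variable C : numClosedFieldType.
Notation idx := mxtens_index.

Lemma big_tens m n (F : 'I_(m*n) -> C) :
  \sum_(t < m*n) F t = \sum_(k < m) \sum_(l < n) F (idx (k,l)).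
Proof.
rewrite pair_big /=.
rewrite (reindex (@mxtens_index m n)) /=; last first.
  by exists (@mxtens_unindex m n) => x _; rewrite (mxtens_indexK, mxtens_unindexK).
by apply: eq_bigr => -[i j].
Qed.

Lemma sum_delta n (m : 'I_n) (f : 'I_n -> C) :
  \sum_(i < n) (i == m)%:R * f i = f m.
Proof.
rewrite (bigD1 m) //= eqxx mul1r big1 ?addr0 // => i /negbTE ->; by rewrite mul0r.
Qed.

Lemma sum_delta' n (m : 'I_n) (f : 'I_n -> C) :
  \sum_(i < n) f i * (m == i)%:R = f m.
Proof.
rewrite (bigD1 m) //= eqxx mulr1 big1 ?addr0 // => i; rewrite eq_sym => /negbTE ->; by rewrite mulr0.
Qed.

Definition bil n (u : 'cV[C]_n) (A : 'M[C]_n) (v : 'cV[C]_n) := (dagger u *m A *m v) 0 0.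

Lemma bilE n (u : 'cV[C]_n) A v :
  bil u A v = \sum_(i < n) \sum_(j < n) (u i 0)^* * A i j * v j 0.
Proof.
rewrite /bil /dagger mxE; under eq_bigr => j _ do rewrite mxE mulr_suml.
rewrite exchange_big /=; apply: eq_bigr => i _; apply: eq_bigr => j _.
by rewrite !mxE.
Qed.

Lemma hermE n (A : 'M[C]_n) : A = dagger A <-> forall i j, A i j = (A j i)^*.
Proof.
split => [H i j | H]; first by rewrite {1}H /dagger !mxE.
by apply/matrixP => i j; rewrite /dagger !mxE H.
Qed.

Lemma ptrace1E m n (X : 'M[C]_(m*n)) i j :
  ptrace1 X i j = \sum_(k < m) X (idx (k, i)) (idx (k, j)).
Proof. by rewrite /ptrace1 mxE. Qed.

Lemma tensE m n p q (A : 'M[C]_(m, n)) (B : 'M[C]_(p, q)) i j k l :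
  (A *t B) (idx (i, j)) (idx (k, l)) = A i k * B j l.
Proof. exact: tensmxE. Qed.

End Aux.

Section Aux2.
Variable C : numClosedFieldType.
Notation idx := mxtens_index.

Lemma sigmaE m n d (A : 'M[C]_m) (B : 'M[C]_n) (X : 'M[C]_(m*(n*d))) i j :
 ptrace1 (ptrace1 ((A *t (B *t (1%:M : 'M_d))) *m X)) i j =
 \sum_l \sum_l' B l l' * \sum_k \sum_k' A k k' * X (idx (k', idx (l', i))) (idx (k, idx (l, j))).
Proof.
rewrite ptrace1E; apply: eq_bigr => l _; rewrite ptrace1E.
under eq_bigr => k _ do rewrite mxE big_tens.
under eq_bigr => k _ do under eq_bigr => k' _ do rewrite big_tens.
under eq_bigr => k _ do rewrite exchange_big.
rewrite exchange_big /=; apply: eq_bigr => l' _.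
rewrite mulr_sumr; apply: eq_bigr => k _.
rewrite mulr_sumr; apply: eq_bigr => k' _.
rewrite (bigD1 i) //= big1 ?addr0; last first.
  by move=> i' /negbTE Hi; rewrite !tensE mxE eq_sym Hi mulr0n !mulr0 mul0r.
by rewrite !tensE mxE eqxx mulr1n mulr1; ring.
Qed.

Lemma rhoaE m n (A : 'M[C]_m) (X : 'M[C]_(m*n)) i j :
 ptrace1 ((A *t (1%:M : 'M_n)) *m X) i j =
 \sum_k \sum_k' A k k' * X (idx (k', i)) (idx (k, j)).
Proof.
rewrite ptrace1E; apply: eq_bigr => k _.
rewrite mxE big_tens; apply: eq_bigr => k' _.
rewrite (bigD1 i) //= big1 ?addr0; last first.
  by move=> i' /negbTE Hi; rewrite !tensE mxE eq_sym Hi mulr0n !mulr0 mul0r.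
by rewrite !tensE mxE eqxx mulr1n mulr1.
Qed.

End Aux2.

Section Aux3.
Variable C : numClosedFieldType.

Lemma sum2 (R : nmodType) (f : 'I_2 -> R) : \sum_(i < 2) f i = f 0 + f 1.
Proof.
rewrite !big_ord_recl big_ord0 addr0; congr (f _ + f _); exact: val_inj.
Qed.

Definition vec2 (p q : C) : 'cV[C]_2 := \col_(i < 2) (if i == 0 then p else q).
Lemma vec2E0 p q : vec2 p q 0 0 = p. Proof. by rewrite mxE. Qed.
Lemma vec2E1 p q : vec2 p q 1 0 = q. Proof. by rewrite mxE. Qed.

Lemma bil2 (A : 'M[C]_2) x : bil x A x =
  (x 0 0)^* * A 0 0 * x 0 0 + (x 0 0)^* * A 0 1 * x 1 0 +
  (x 1 0)^* * A 1 0 * x 0 0 + (x 1 0)^* * A 1 1 * x 1 0.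
Proof. by rewrite bilE !sum2 !addrA. Qed.

Lemma psd_ge0 n (A : 'M[C]_n) : psd A -> forall x, 0 <= bil x A x.
Proof. by case. Qed.

Lemma tr2 (A R : 'M[C]_2) : psd A -> (forall x : 'cV_2, 0 <= bil x R x) ->
  0 <= \sum_k \sum_k' A k k' * R k' k.
Proof.
move=> pA pR; have [/hermE hA _] := pA.
have qA := psd_ge0 pA.
rewrite !sum2.
set a := A 0 0; set b := A 0 1; set c := A 1 1.
have hb : A 1 0 = b^* by rewrite hA.
rewrite hb.
have a0 : 0 <= a by have := qA (vec2 1 0); rewrite bil2 !vec2E0 !vec2E1; rewrite !(conjC0, conjC1); 
  rewrite !(mul0r, mulr0, mul1r, mulr1, addr0, add0r).
have c0 : 0 <= c by have := qA (vec2 0 1); rewrite bil2 !vec2E0 !vec2E1; rewrite !(conjC0, conjC1); 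
  rewrite !(mul0r, mulr0, mul1r, mulr1, addr0, add0r).
have r11 : 0 <= R 1 1 by have := pR (vec2 0 1); rewrite bil2 !vec2E0 !vec2E1; rewrite !(conjC0, conjC1); 
  rewrite !(mul0r, mulr0, mul1r, mulr1, addr0, add0r).
have ac : a^* = a by rewrite geC0_conj.
have cc : c^* = c by rewrite geC0_conj.
have N0 : 0 <= b * b^* by exact: mul_conjC_ge0.
have key : 0 <= a * (a * c - b * b^*).
  have := qA (vec2 (- b) a); rewrite bil2 !vec2E0 !vec2E1 -/a -/b -/c hb ac.
  rewrite rmorphN /=.
  have -> : (- b^*) * a * - b + (- b^*) * b * a + a * b^* * - b + a * c * a =
    a * (a * c - b * b^*) by ring.
  by [].
have [a_eq0|an0'] := eqVneq a 0.
  {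
  have b0 : b = 0.
    have := qA (vec2 1 (- ((c + 1)^-1 * b^*))).
    rewrite bil2 !vec2E0 !vec2E1 -/a -/b -/c hb a_eq0 conjC1 rmorphN rmorphM /= conjCK.
    rewrite fmorphV /= rmorphD /= cc conjC1.
    have c1 : c + 1 != 0 by rewrite lt0r_neq0 // ltr_wpDl.
    have -> : 1 * 0 * 1 + 1 * b * - ((c + 1)^-1 * b^*) +
        - ((c + 1)^-1 * b) * b^* * 1 +
        - ((c + 1)^-1 * b) * c * - ((c + 1)^-1 * b^*) =
        - ((b * b^*) * ((c + 2) / ((c + 1) ^+ 2))) by field.
    rewrite oppr_ge0 => H.
    have H2 : 0 <= (b * b^*) * ((c + 2) / ((c + 1) ^+ 2)).
      apply: mulr_ge0 => //; apply: divr_ge0; first by rewrite addr_ge0.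
      by rewrite exprn_ge0 // addr_ge0.
    have : (b * b^*) * ((c + 2) / ((c + 1) ^+ 2)) == 0 by rewrite eq_le H H2.
    rewrite mulf_eq0 mul_conjC_eq0 => /orP [/eqP //|].
    rewrite mulf_eq0 invr_eq0 expf_eq0 (negbTE c1) andbF orbF => /eqP c2.
    have : 0 < c + 2 by rewrite ltr_wpDl.
    by rewrite c2 ltxx.
  rewrite b0 a_eq0 conjC0 !mul0r !add0r; exact: mulr_ge0. }
have apos : 0 < a by rewrite lt0r an0' a0.
have an0 : a != 0 by rewrite gt_eqF.
have e1 : a * R 0 0 + b * R 1 0 + (b^* * R 0 1 + c * R 1 1) =
   a^-1 * bil (vec2 a b^*) R (vec2 a b^*) + ((a * c - b * b^*) / a) * R 1 1.
  rewrite bil2 !vec2E0 !vec2E1 ac conjCK. field. exact: an0.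
rewrite e1; apply: addr_ge0; first by apply: mulr_ge0; [rewrite invr_ge0 ltW | exact: pR].
apply: mulr_ge0 => //; apply: divr_ge0; last exact: ltW.
by move: key; rewrite pmulr_rge0.
Qed.

End Aux3.

Section Aux4.
Variable C : numClosedFieldType.
Notation idx := mxtens_index.

Definition Fs d (A B : 'M[C]_2) (X : 'M[C]_(2*(2*d))) :=
  ptrace1 (ptrace1 ((A *t (B *t (1%:M : 'M_d))) *m X)).

Lemma Fs_herm d A B X : A = dagger A -> B = dagger B -> X = dagger X ->
  @Fs d A B X = dagger (Fs A B X).
Proof.
move=> /hermE hA /hermE hB /hermE hX; apply/hermE => i j.
rewrite /Fs !sigmaE rmorph_sum /=; rewrite exchange_big /=.
apply: eq_bigr => l _; rewrite rmorph_sum /=; apply: eq_bigr => l' _.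
rewrite rmorphM /= rmorph_sum /= -hB; congr (_ * _).
rewrite exchange_big /=; apply: eq_bigr => k _; rewrite rmorph_sum /=; apply: eq_bigr => k' _.
by rewrite rmorphM /= -hA -hX.
Qed.

End Aux4.

Section Aux5.
Variable C : numClosedFieldType.
Notation idx := mxtens_index.

Lemma EqA d (A B : 'M[C]_2) (X : 'M[C]_(2*(2*d))) v :
  bil v (Fs A B X) v = \sum_l \sum_l' B l l' *
    (\matrix_(l0, l1) \sum_k \sum_k' A k k' * (\sum_i \sum_j (v i 0)^* *
        X (idx (k', idx (l0, i))) (idx (k, idx (l1, j))) * v j 0)) l' l.
Proof.
rewrite bilE.
under eq_bigr => i _ do under eq_bigr => j _ do rewrite /Fs sigmaE mulr_sumr mulr_suml.
under eq_bigr => i _ do rewrite exchange_big /=.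
rewrite exchange_big /=; apply: eq_bigr => l _.
under eq_bigr => i _ do under eq_bigr => l' _ do rewrite mulr_sumr mulr_suml.
under eq_bigr => i _ do rewrite exchange_big /=.
rewrite exchange_big /=; apply: eq_bigr => l' _.
rewrite mxE mulr_sumr.
under [RHS]eq_bigr => k _ do rewrite mulr_sumr.
under eq_bigr => i _ do under eq_bigr => j _ do rewrite mulrA mulr_sumr mulr_suml.
under eq_bigr => i _ do rewrite exchange_big /=.
rewrite exchange_big /=; apply: eq_bigr => k _.
under eq_bigr => i _ do under eq_bigr => j _ do rewrite mulr_sumr mulr_suml.
under eq_bigr => i _ do rewrite exchange_big /=.
rewrite exchange_big /=; apply: eq_bigr => k' _.
rewrite !mulr_sumr; apply: eq_bigr => i _.
rewrite !mulr_sumr; apply: eq_bigr => j _.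
ring.
Qed.

End Aux5.

Section Aux6.
Variable C : numClosedFieldType.
Notation idx := mxtens_index.

Lemma EqB d (A : 'M[C]_2) (X : 'M[C]_(2*(2*d))) (v : 'cV[C]_d) (y : 'cV[C]_2) :
  bil y (\matrix_(l0, l1) \sum_k \sum_k' A k k' * (\sum_i \sum_j (v i 0)^* *
        X (idx (k', idx (l0, i))) (idx (k, idx (l1, j))) * v j 0)) y =
  \sum_k \sum_k' A k k' * (\matrix_(k0, k1) \sum_l' \sum_l \sum_i \sum_j
     (y l' 0)^* * (v i 0)^* * X (idx (k0, idx (l', i))) (idx (k1, idx (l, j)))
       * y l 0 * v j 0) k' k.
Proof.
rewrite bilE.
under eq_bigr => l' _ do under eq_bigr => l _ do rewrite mxE mulr_sumr mulr_suml.
under eq_bigr => l' _ do rewrite exchange_big /=.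
rewrite exchange_big /=; apply: eq_bigr => k _.
under eq_bigr => l' _ do under eq_bigr => l _ do rewrite mulr_sumr mulr_suml.
under eq_bigr => l' _ do rewrite exchange_big /=.
rewrite exchange_big /=; apply: eq_bigr => k' _.
rewrite mxE mulr_sumr; apply: eq_bigr => l' _.
rewrite mulr_sumr; apply: eq_bigr => l _.
have E : forall a b s c : C, a * (b * s) * c = b * (a * s * c) by move=> *; ring.
rewrite E; congr (_ * _).
rewrite mulr_sumr mulr_suml; apply: eq_bigr => i _.
rewrite mulr_sumr mulr_suml; apply: eq_bigr => j _.
ring.
Qed.

Definition zvec d (x y : 'cV[C]_2) (v : 'cV[C]_d) : 'cV[C]_(2*(2*d)) :=
  \col_t (x (mxtens_unindex t).1 0 * y (mxtens_unindex (mxtens_unindex t).2).1 0 *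
          v (mxtens_unindex (mxtens_unindex t).2).2 0).

Lemma zvecE d x y (v : 'cV[C]_d) k l i : zvec x y v (idx (k, idx (l, i))) 0 = x k 0 * y l 0 * v i 0.
Proof. by rewrite mxE !mxtens_indexK. Qed.

Lemma EqC d (X : 'M[C]_(2*(2*d))) (v : 'cV[C]_d) (y x : 'cV[C]_2) :
  bil x (\matrix_(k0, k1) \sum_l' \sum_l \sum_i \sum_j
     (y l' 0)^* * (v i 0)^* * X (idx (k0, idx (l', i))) (idx (k1, idx (l, j)))
       * y l 0 * v j 0) x = bil (zvec x y v) X (zvec x y v).
Proof.
rewrite !bilE big_tens; apply: eq_bigr => k' _.
rewrite big_tens.
under [RHS]eq_bigr => l' _ do under eq_bigr => i _ do rewrite big_tens.
under [RHS]eq_bigr => l' _ do under eq_bigr => i _ do under eq_bigr => k _ do rewrite big_tens.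
under [LHS]eq_bigr => k _ do rewrite mxE mulr_sumr mulr_suml.
rewrite exchange_big /=; apply: eq_bigr => l' _.
under eq_bigr => k _ do rewrite mulr_sumr mulr_suml.
under eq_bigr => k _ do under eq_bigr => l _ do rewrite mulr_sumr mulr_suml.
under eq_bigr => k _ do rewrite exchange_big /=.
rewrite exchange_big /=; apply: eq_bigr => i _.
apply: eq_bigr => k _; apply: eq_bigr => l _.
rewrite mulr_sumr mulr_suml; apply: eq_bigr => j _.
rewrite !zvecE !rmorphM /=; ring.
Qed.


Lemma Fs_psd d A B (X : 'M[C]_(2*(2*d))) : psd A -> psd B -> psd X -> psd (Fs A B X).
Proof.
move=> pA pB pX; split.
  by apply: Fs_herm; [case: pA | case: pB | case: pX].
move=> v; rewrite -/(bil v _ v) EqA; apply: tr2 => // y.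
rewrite EqB; apply: tr2 => // x.
rewrite EqC; exact: psd_ge0.
Qed.

End Aux6.

Section Aux7.
Variable C : numClosedFieldType.
Notation idx := mxtens_index.

Lemma FsB d (A : 'M[C]_2) (B : 'I_2 -> 'M[C]_2) (X : 'M[C]_(2*(2*d))) :
  \sum_(b < 2) Fs A (B b) X = Fs A (\sum_(b < 2) B b) X.
Proof.
apply/matrixP => i j; rewrite summxE sigmaE.
under eq_bigr => b _ do rewrite sigmaE.
rewrite exchange_big /=; apply: eq_bigr => l _.
rewrite exchange_big /=; apply: eq_bigr => l' _.
by rewrite summxE mulr_suml.
Qed.

Lemma FsA d (A : 'I_2 -> 'M[C]_2) (B : 'M[C]_2) (X : 'M[C]_(2*(2*d))) :
  \sum_(a < 2) Fs (A a) B X = Fs (\sum_(a < 2) A a) B X.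
Proof.
apply/matrixP => i j; rewrite summxE sigmaE.
under eq_bigr => b _ do rewrite sigmaE.
rewrite exchange_big /=; apply: eq_bigr => l _.
rewrite exchange_big /=; apply: eq_bigr => l' _.
rewrite -mulr_sumr; congr (_ * _).
rewrite exchange_big /=; apply: eq_bigr => k _.
rewrite exchange_big /=; apply: eq_bigr => k' _.
by rewrite summxE mulr_suml.
Qed.

Lemma sum_delta2 n (m : 'I_n) (f : 'I_n -> C) :
  \sum_(i < n) (m == i)%:R * f i = f m.
Proof.
rewrite (bigD1 m) //= eqxx mul1r big1 ?addr0 // => i; rewrite eq_sym => /negbTE ->; by rewrite mul0r.
Qed.

Lemma Fs_tr d (X : 'M[C]_(2*(2*d))) : \tr (Fs 1%:M 1%:M X) = \tr X.
Proof.
rewrite /mxtrace big_tens; under [RHS]eq_bigr => k _ do rewrite big_tens.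
transitivity (\sum_(i < d) \sum_(l < 2) \sum_(k < 2) X (idx (k, idx (l, i))) (idx (k, idx (l, i)))).
  apply: eq_bigr => i _; rewrite /Fs sigmaE; apply: eq_bigr => l _.
  under eq_bigr => l' _ do rewrite mxE.
  rewrite sum_delta2; apply: eq_bigr => k _.
  under eq_bigr => k' _ do rewrite mxE.
  by rewrite sum_delta2.
under [LHS]eq_bigr => i _ do rewrite exchange_big /=.
rewrite [LHS]exchange_big /=; apply: eq_bigr => k _.
by rewrite [LHS]exchange_big.
Qed.

Lemma NS_sigma d (X : 'M[C]_(2*(2*d))) (M Q : 'I_2 -> 'I_2 -> 'M[C]_2) :
  density X -> (forall x, povm (fun a => M a x)) -> (forall y, povm (fun b => Q b y)) ->
  no_signaling (fun a b x y => Fs (M a x) (Q b y) X).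
Proof.
move=> [pX trX] pM pQ; split; [|split; [|split]].
- move=> a b x y; apply: Fs_psd => //; [case: (pM x) | case: (pQ y)] => //.
- exists (Fs 1%:M 1%:M X); split; first by rewrite Fs_tr.
  move=> x y; under eq_bigr => a _ do rewrite FsB; have [_ ->] := pQ y.
  by rewrite FsA; have [_ ->] := pM x.
- by move=> a x y y'; rewrite !FsB; have [_ ->] := pQ y; have [_ ->] := pQ y'.
- by move=> b x x' y; rewrite !FsA; have [_ ->] := pM x; have [_ ->] := pM x'.
Qed.

End Aux7.

Section Aux8.
Variable C : numClosedFieldType.

Lemma bilDm n (u v : 'cV[C]_n) A B : bil u (A + B) v = bil u A v + bil u B v.
Proof.
rewrite !bilE -big_split; apply: eq_bigr => i _; rewrite -big_split; apply: eq_bigr => j _.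
rewrite mxE /=; ring.
Qed.

Lemma bilZm n (u v : 'cV[C]_n) c A : bil u (c *: A) v = c * bil u A v.
Proof.
rewrite !bilE mulr_sumr; apply: eq_bigr => i _; rewrite mulr_sumr; apply: eq_bigr => j _.
rewrite mxE; ring.
Qed.

Lemma bilSm n I (r : seq I) (P : pred I) (u v : 'cV[C]_n) (F : I -> 'M[C]_n) :
  bil u (\sum_(j <- r | P j) F j) v = \sum_(j <- r | P j) bil u (F j) v.
Proof.
elim/big_rec2: _ => [|j y1 y2 Pj <-]; last by rewrite bilDm.
by rewrite /bil mulmx0 mul0mx mxE.
Qed.

Lemma bilDl n (u1 u2 v : 'cV[C]_n) A : bil (u1 + u2) A v = bil u1 A v + bil u2 A v.
Proof.
rewrite !bilE -big_split; apply: eq_bigr => i _; rewrite -big_split; apply: eq_bigr => j _.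
rewrite mxE rmorphD /=; ring.
Qed.

Lemma bilDr n (u v1 v2 : 'cV[C]_n) A : bil u A (v1 + v2) = bil u A v1 + bil u A v2.
Proof.
rewrite !bilE -big_split; apply: eq_bigr => i _; rewrite -big_split; apply: eq_bigr => j _.
rewrite mxE /=; ring.
Qed.

Lemma bilZl n (u v : 'cV[C]_n) t A : bil (t *: u) A v = t^* * bil u A v.
Proof.
rewrite !bilE mulr_sumr; apply: eq_bigr => i _; rewrite mulr_sumr; apply: eq_bigr => j _.
rewrite mxE rmorphM /=; ring.
Qed.

Lemma bilZr n (u v : 'cV[C]_n) t A : bil u A (t *: v) = t * bil u A v.
Proof.
rewrite !bilE mulr_sumr; apply: eq_bigr => i _; rewrite mulr_sumr; apply: eq_bigr => j _.
rewrite mxE; ring.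
Qed.

Lemma bil_e_l n (i : 'I_n) (A : 'M[C]_n) v : bil (delta_mx i 0) A v = (A *m v) i 0.
Proof.
rewrite bilE mxE.
under eq_bigr => p _ do rewrite mxE andbT rmorph_nat.
under eq_bigr => p _ do under eq_bigr => q _ do rewrite -mulrA.
under eq_bigr => p _ do rewrite -mulr_sumr.
by rewrite (sum_delta i (fun p => \sum_(j < n) A p j * v j 0)).
Qed.

Lemma mul_e n (i : 'I_n) (A : 'M[C]_n) p : (A *m (delta_mx i 0 : 'cV[C]_n)) p 0 = A p i.
Proof.
rewrite mxE; under eq_bigr => j _ do rewrite mxE andbT eq_sym.
exact: sum_delta'.
Qed.

Lemma psd_ker n (r : 'M[C]_n) v : psd r -> bil v r v = 0 -> forall i, (r *m v) i 0 = 0.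
Proof.
move=> pr H0 i.
have [/hermE hr qr] := pr.
set e : 'cV[C]_n := delta_mx i 0.
set al := (r *m v) i 0.
set be := r i i.
have be0 : 0 <= be.
  by have := qr e; rewrite -/(bil e r e) bil_e_l mul_e.
have bec : be^* = be by rewrite geC0_conj.
have b1 : be + 1 != 0 by rewrite lt0r_neq0 // ltr_wpDl.
have e1 : bil e r v = al by rewrite bil_e_l.
have e2 : bil v r e = al^*.
  rewrite /al -bil_e_l !bilE rmorph_sum /= exchange_big /=; apply: eq_bigr => p _.
  rewrite rmorph_sum /=; apply: eq_bigr => q _.
  rewrite !rmorphM /= conjCK [r q p]hr; ring.
have e3 : bil e r e = be.
  by rewrite bil_e_l mul_e.
set t := - al / (be + 1).
have := qr (v + t *: e); rewrite -/(bil _ r _) !(bilDl, bilDr, bilZl, bilZr) H0 e1 e2 e3.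
have tc : t^* = - al^* / (be + 1) by rewrite /t rmorphM rmorphN fmorphV /= rmorphD /= bec conjC1.
rewrite tc.
have -> : 0 + t * al^* + (- al^* / (be + 1) * al + - al^* / (be + 1) * (t * be)) =
   - ((al * al^*) * ((be + 2) / ((be + 1) ^+ 2))).
  rewrite /t; field; exact: b1.
rewrite oppr_ge0 => H.
have H2 : 0 <= (al * al^*) * ((be + 2) / ((be + 1) ^+ 2)).
  apply: mulr_ge0; first exact: mul_conjC_ge0.
  apply: divr_ge0; first by rewrite addr_ge0.
  by rewrite exprn_ge0 // addr_ge0.
have : (al * al^*) * ((be + 2) / ((be + 1) ^+ 2)) == 0 by rewrite eq_le H H2.
rewrite mulf_eq0 mul_conjC_eq0 => /orP [/eqP //|].
rewrite mulf_eq0 invr_eq0 expf_eq0 (negbTE b1) andbF orbF => /eqP c2.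
have : 0 < be + 2 by rewrite ltr_wpDl.
by rewrite c2 ltxx.
Qed.

End Aux8.

Section Aux9.
Variable C : numClosedFieldType.

Lemma rank1_form n (r : 'M[C]_n) (w : 'I_n -> C) k0 :
 (forall i j, r i j = (r j i)^*) ->
 (forall i m k, (w k)^* * r i m = (w m)^* * r i k) -> w k0 != 0 ->
 forall i m, r i m = w i * (w m)^* * ((r k0 k0)^* / (w k0 * (w k0)^*)).
Proof.
move=> hr H nz i m.
have cnz : (w k0)^* != 0 by rewrite conjC_eq0.
have E1 : r i m = (w m)^* * r i k0 / (w k0)^*.
  by rewrite -H mulrC mulrA mulVf // mul1r.
have E2 : r k0 i = (w i)^* * r k0 k0 / (w k0)^*.
  by rewrite -H mulrC mulrA mulVf // mul1r.
rewrite E1 [r i k0]hr E2 !rmorphM /= fmorphV /= !conjCK.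
field; apply/andP; split => //.
Qed.

Lemma alg n (r : 'M[C]_n) (w w' : 'I_n -> C) :
 (forall i j, r i j = (r j i)^*) ->
 (forall i m k, (w k)^* * r i m = (w m)^* * r i k) ->
 (forall i m k, (w' k)^* * r i m = (w' m)^* * r i k) ->
 (exists k, w k != 0) -> (exists k, w' k != 0) ->
 ~ (exists lam, forall i, w i = lam * w' i) ->
 forall i m, r i m = 0.
Proof.
move=> hr H H' [k0 nz] [k1 nz'] np.
have F1 := rank1_form hr H nz.
have F2 := rank1_form hr H' nz'.
set g := (r k0 k0)^* / (w k0 * (w k0)^*) in F1.
set g' := (r k1 k1)^* / (w' k1 * (w' k1)^*) in F2.
have [g0|gn0] := eqVneq g 0.
  by move=> i m; rewrite F1 g0 mulr0.
exfalso; apply: np.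
have cnz : (w k0)^* != 0 by rewrite conjC_eq0.
exists ((w' k0)^* * g' / ((w k0)^* * g)) => i.
have := F1 i k0; rewrite F2 => E.
apply: (@mulIf _ ((w k0)^* * g)); first by rewrite mulf_neq0.
rewrite mulrA -E. field. by apply/andP; split.
Qed.

End Aux9.

Section Aux10.
Variable C : numClosedFieldType.
Notation idx := mxtens_index.

Lemma ord2 (b : 'I_2) : b = 0 \/ b = 1.
Proof. by case: b => [[|[|]]] // H; [left|right]; apply: val_inj. Qed.

Lemma prod_not_ent d (psi : 'cV[C]_(2*d)) (u0 u1 : C) (f : 'I_d -> C) :
  (forall i, psi (idx (0, i)) 0 = u0 * f i) -> (forall i, psi (idx (1, i)) 0 = u1 * f i) ->
  ~ entangled psi.
Proof.
move=> H0 H1 E; apply: E; exists (vec2 u0 u1), (\col_i f i).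
apply/matrixP => p q; case: (mxtens_indexP p) => l i.
rewrite [q]ord1 !mxE mxtens_indexK /=.
case: (ord2 l) => ->; by rewrite ?H0 ?H1.
Qed.

Lemma ex_nz d (f : 'I_d -> C) : ~ (forall k, f k = 0) -> exists k, f k != 0.
Proof.
move=> H; case: (boolP [exists k, f k != 0]) => [/existsP //|].
rewrite negb_exists => /forallP H2; exfalso; apply: H => k.
by have := H2 k; rewrite negbK => /eqP.
Qed.

Variable d : nat.
Variable psi : 'cV[C]_(2*d).
Hypothesis ent : entangled psi.
Notation ps l i := (psi (idx (l, i)) 0).

Lemma N1 (b : 'I_2) : exists k, ps b k != 0.
Proof.
apply: ex_nz => H; case: (ord2 b) => Eb; subst b.
  by apply: (@prod_not_ent _ psi 0 1 (fun i => ps 1 i)) => // i; rewrite ?H ?mul0r ?mul1r.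
by apply: (@prod_not_ent _ psi 1 0 (fun i => ps 0 i)) => // i; rewrite ?H ?mul0r ?mul1r.
Qed.

Lemma N2 (t : C) : t * t = 1 -> exists k, ps 0 k + t * ps 1 k != 0.
Proof.
move=> tt; apply: ex_nz => H.
apply: (@prod_not_ent _ psi (- t) 1 (fun i => ps 1 i)) => // i; last by rewrite mul1r.
by have := H i; move/eqP; rewrite addr_eq0 => /eqP ->; rewrite mulNr.
Qed.

Lemma N3 (b : 'I_2) (t : C) : t * t = 1 ->
  ~ (exists lam, forall i, ps b i = lam * (ps 0 i + t * ps 1 i)).
Proof.
move=> tt [lam H].
have tn0 : t != 0 by apply/eqP => t0; move: tt; rewrite t0 mul0r => /eqP; rewrite eq_sym oner_eq0.
have [l0|ln0] := eqVneq lam 0.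
  case: (ord2 b) => Eb; subst b.
    apply: (@prod_not_ent _ psi 0 1 (fun i => ps 1 i)) => // i; last by rewrite mul1r.
    by rewrite H l0 !mul0r.
  apply: (@prod_not_ent _ psi 1 0 (fun i => ps 0 i)) => // i; first by rewrite mul1r.
  by rewrite H l0 !mul0r.
case: (ord2 b) => Eb; subst b.
  apply: (@prod_not_ent _ psi 1 ((1 - lam) / (lam * t)) (fun i => ps 0 i)) => // i; first by rewrite mul1r.
  have := H i => E.
  have E2 : ps 1 i * (lam * t) = (1 - lam) * ps 0 i.
    apply/eqP; rewrite -subr_eq0; apply/eqP.
    transitivity (- (ps 0 i - lam * (ps 0 i + t * ps 1 i))); first by ring.
    by rewrite -E subrr oppr0.
  apply: (@mulIf _ (lam * t)); first by rewrite mulf_neq0.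
  rewrite E2; field; by apply/andP; split.
apply: (@prod_not_ent _ psi ((1 - lam * t) / lam) 1 (fun i => ps 1 i)) => // i; last by rewrite mul1r.
have := H i => E.
have E2 : ps 0 i * lam = (1 - lam * t) * ps 1 i.
  apply/eqP; rewrite -subr_eq0; apply/eqP.
  transitivity (- (ps 1 i - lam * (ps 0 i + t * ps 1 i))); first by ring.
  by rewrite -E subrr oppr0.
apply: (@mulIf _ lam) => //.
rewrite E2; field; exact: ln0.
Qed.

End Aux10.

Section Aux11.
Variable C : numClosedFieldType.
Notation idx := mxtens_index.

Definition Qm (k : C) (s : 'I_2 -> C) : 'M[C]_2 := \matrix_(l, l') (k * s l * s l').

Lemma Qm_psd k s : 0 <= k -> (forall l, (s l)^* = s l) -> psd (Qm k s).
Proof.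
move=> k0 cs; have kc : k^* = k by rewrite geC0_conj.
split.
  by apply/hermE => i j; rewrite !mxE !rmorphM /= kc !cs; ring.
move=> x; rewrite -/(bil x _ x) bil2 !mxE.
set t := s 0 * x 0 0 + s 1 * x 1 0.
have -> : (x 0 0)^* * (k * s 0 * s 0) * x 0 0 + (x 0 0)^* * (k * s 0 * s 1) * x 1 0 +
   (x 1 0)^* * (k * s 1 * s 0) * x 0 0 + (x 1 0)^* * (k * s 1 * s 1) * x 1 0 =
   k * (t * t^*) by rewrite /t rmorphD !rmorphM /= !cs; ring.
by apply: mulr_ge0 => //; exact: mul_conjC_ge0.
Qed.

Lemma Qm_idem k s : k * (s 0 * s 0 + s 1 * s 1) = 1 -> Qm k s *m Qm k s = Qm k s.
Proof.
move=> H; apply/matrixP => l l'; rewrite mxE sum2 !mxE.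
transitivity (k * s l * s l' * (k * (s 0 * s 0 + s 1 * s 1))); first by ring.
by rewrite H mulr1.
Qed.

Lemma FsE2 d (A B : 'M[C]_2) (X : 'M[C]_(2*(2*d))) i j :
  Fs A B X i j = \sum_l \sum_l' B l l' * ptrace1 ((A *t (1%:M : 'M_(2*d))) *m X) (idx (l', i)) (idx (l, j)).
Proof.
rewrite /Fs sigmaE; apply: eq_bigr => l _; apply: eq_bigr => l' _.
by rewrite rhoaE.
Qed.

Lemma sig0E d (A : 'M[C]_2) (X : 'M[C]_(2*(2*d))) (psi : 'cV[C]_(2*d)) c k s (v : 'cV[C]_d) :
  (forall l, (s l)^* = s l) ->
  ptrace1 ((A *t (1%:M : 'M_(2*d))) *m X) = c *: (psi *m dagger psi) ->
  bil v (Fs A (Qm k s) X) v =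
  c * k * (\sum_(i < d) (v i 0)^* * (\sum_(l < 2) s l * psi (idx (l, i)) 0)) *
     (\sum_(j < d) (\sum_(l < 2) s l * psi (idx (l, j)) 0)^* * v j 0).
Proof.
move=> cs Hr; rewrite bilE.
under eq_bigr => i _ do under eq_bigr => j _ do rewrite FsE2 Hr !sum2 !mxE !big_ord1 !mxE.
transitivity (\sum_(i<d) \sum_(j<d) c * k * ((v i 0)^* * (\sum_(l < 2) s l * psi (idx (l, i)) 0)) *
   ((\sum_(l < 2) s l * psi (idx (l, j)) 0)^* * v j 0)).
  apply: eq_bigr => i _; apply: eq_bigr => j _.
  rewrite !sum2 rmorphD !rmorphM /= !cs; ring.
under eq_bigr => i _ do rewrite -mulr_sumr.
by rewrite -mulr_suml -mulr_sumr.
Qed.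

End Aux11.

Section Aux12.
Variable C : numClosedFieldType.
Notation idx := mxtens_index.

Definition sgn (b : 'I_2) : C := if b == 0 then 1 else -1.
Definition sv (b y l : 'I_2) : C :=
  if y == 0 then (l == b)%:R else (if l == 0 then 1 else sgn b).
Definition kap (y : 'I_2) : C := if y == 0 then 1 else 2^-1.
Definition QQ (b y : 'I_2) : 'M[C]_2 := Qm (kap y) (sv b y).

Lemma sgn2 b : sgn b * sgn b = 1.
Proof. by rewrite /sgn; case: ifP => _; rewrite ?mulr1 ?mulrNN ?mulr1. Qed.

Lemma conj_sv b y l : (sv b y l)^* = sv b y l.
Proof.
rewrite /sv /sgn; case: ifP => _; first by rewrite conjC_nat.
case: ifP => _; first exact: conjC1.
case: ifP => _; [exact: conjC1 | exact: conjCN1].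
Qed.

Lemma two_neq0 : (2 : C) != 0.
Proof. by rewrite pnatr_eq0. Qed.

Lemma kap_ge0 y : 0 <= kap y.
Proof. rewrite /kap; case: ifP => _ //; by rewrite invr_ge0 ler0n. Qed.

Lemma kap_norm b y : kap y * (sv b y 0 * sv b y 0 + sv b y 1 * sv b y 1) = 1.
Proof.
rewrite /kap /sv; case: (ord2 y) => ->; rewrite /=.
  by case: (ord2 b) => ->; rewrite /= ?mul1r ?mul0r ?mulr0 ?add0r ?addr0 ?mulr1.
rewrite sgn2 mul1r; apply: mulVf; exact: two_neq0.
Qed.

Lemma QQ_proj y : projective_meas (fun b => QQ b y).
Proof.
split; [split|].
- by move=> b; apply: Qm_psd; [exact: kap_ge0 | exact: conj_sv].
- apply/matrixP => l l'; rewrite summxE sum2 !mxE /sv /kap /sgn.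
  case: (ord2 y) => ->; case: (ord2 l) => ->; case: (ord2 l') => -> /=;
    rewrite ?mulr1 ?mulr0 ?mul1r ?mul0r ?addr0 ?add0r ?mulrN ?mulNr ?opprK //; by field.
- by move=> b; apply: Qm_idem; exact: kap_norm.
Qed.

End Aux12.

Section Aux13.
Variable C : numClosedFieldType.
Notation idx := mxtens_index.

Definition wv d (psi : 'cV[C]_(2*d)) (b y : 'I_2) (i : 'I_d) : C :=
  \sum_(l < 2) @sv C b y l * psi (idx (l, i)) 0.

Lemma wv0 d (psi : 'cV[C]_(2*d)) b i : wv psi b 0 i = psi (idx (b, i)) 0.
Proof.
rewrite /wv /sv /=.
exact: (sum_delta b (fun l => psi (idx (l, i)) 0)).
Qed.

Lemma wv1 d (psi : 'cV[C]_(2*d)) b i :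
  wv psi b 1 i = psi (idx (0, i)) 0 + @sgn C b * psi (idx (1, i)) 0.
Proof. by rewrite /wv sum2 /sv /= mul1r. Qed.

Definition kv d (w : 'I_d -> C) (k m : 'I_d) : 'cV[C]_d :=
  \col_i ((w k)^* * (i == m)%:R - (w m)^* * (i == k)%:R).

Lemma kv_orth d (w : 'I_d -> C) k m : \sum_(i < d) (kv w k m i 0)^* * w i = 0.
Proof.
transitivity (\sum_(i < d) ((i == m)%:R * (w k * w i) - (i == k)%:R * (w m * w i))).
  by apply: eq_bigr => i _; rewrite mxE rmorphB !rmorphM /= !conjCK !conjC_nat; ring.
by rewrite sumrB (sum_delta m (fun i => w k * w i)) (sum_delta k (fun i => w m * w i)) mulrC subrr.
Qed.

Lemma kv_mul d (w : 'I_d -> C) k m (r : 'M[C]_d) i :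
  (r *m kv w k m) i 0 = (w k)^* * r i m - (w m)^* * r i k.
Proof.
rewrite mxE.
transitivity (\sum_(t < d) ((t == m)%:R * ((w k)^* * r i t) - (t == k)%:R * ((w m)^* * r i t))).
  by apply: eq_bigr => t _; rewrite mxE; ring.
by rewrite sumrB (sum_delta m (fun t => (w k)^* * r i t)) (sum_delta k (fun t => (w m)^* * r i t)).
Qed.

End Aux13.

Unset Implicit Arguments.
Set Strict Implicit.

Theorem theorem4 (C : numClosedFieldType) (d : nat)
    (rho : 'M[C]_(2 * (2 * d))) (M : 'I_2 -> 'I_2 -> 'M[C]_2) :
  density rho ->
  (\rank rho = 2)%N ->
  (forall x, povm (fun a => M a x)) ->
  (forall a : 'I_2,
     let rho_a0 := ptrace1 (M a 0 *t (1%:M : 'M[C]_(2 * d)) *m rho) in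
     (\rank rho_a0 = 1)%N /\
     exists psi : 'cV[C]_(2 * d),
       entangled psi /\ exists c : C, rho_a0 = c *: (psi *m dagger psi)) ->
  exists Q : 'I_2 -> 'I_2 -> 'M[C]_2,
    (forall y, projective_meas (fun b => Q b y)) /\
    on_edge (fun a b x y =>
      ptrace1 (ptrace1 ((M a x *t (Q b y *t (1%:M : 'M[C]_d))) *m rho))).
Proof.
move=> dens _ povmM Hrho.
exists (fun b y => QQ C b y); split; first exact: QQ_proj.
split; first by apply: (NS_sigma dens povmM) => y; case: (QQ_proj C y).
move=> eps S1 S2 /andP [e0 e1] [N [q [p [p' [r [q0 [qs [pp [pp' [rd S1E]]]]]]]]]] NS2 Hdec.
have [// | en0] := eqVneq eps 0.
exfalso.
have key : forall j a b y v, q j * p j a 0 * p' j b y != 0 ->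
    bil v (Fs (M a 0) (QQ C b y) rho) v = 0 -> bil v (r j) v = 0.
  move=> j a b y v nz H0.
  have E : Fs (M a 0) (QQ C b y) rho = eps *: S1 a b 0 y + (1 - eps) *: S2 a b 0 y := Hdec a b 0 y.
  move: H0; rewrite E bilDm !bilZm S1E bilSm.
  under eq_bigr => j' _ do rewrite bilZm.
  have cge : forall j', 0 <= q j' * p j' a 0 * p' j' b y.
    move=> j'; apply: mulr_ge0; first apply: mulr_ge0; [exact: q0 | by case: (pp j') | by case: (pp' j')].
  have rge : forall j', 0 <= bil v (r j') v by move=> j'; apply: psd_ge0; case: (rd j').
  have sge : 0 <= \sum_(j' < N) q j' * p j' a 0 * p' j' b y * bil v (r j') v.
    by apply: sumr_ge0 => j' _; apply: mulr_ge0.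
  have s2ge : 0 <= bil v (S2 a b 0 y) v.
    by apply: psd_ge0; case: NS2 => H _; exact: H.
  move/eqP; rewrite paddr_eq0; first last.
  - by apply: mulr_ge0 => //; rewrite subr_ge0.
  - by apply: mulr_ge0.
  case/andP => /eqP H1 _.
  move: H1 => /eqP; rewrite mulf_eq0 (negbTE en0) /= => /eqP H1.
  have := @psumr_eq0P _ _ xpredT (fun j' => q j' * p j' a 0 * p' j' b y * bil v (r j') v)
    (fun j' _ => mulr_ge0 (cge j') (rge j')) H1 j isT.
  by move/eqP; rewrite mulf_eq0 (negbTE nz) /= => /eqP.
have qz : forall j, q j = 0.
  move=> j.
  have pa : forall a, q j * p j a 0 = 0.
    move=> a; apply/eqP; apply/negPn/negP => nz.
    have exb : forall y, exists b, p' j b y != 0.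
      move=> y; case: (pp' j) => _ /(_ y) H.
      by apply: ex_nz => Hz; move: H; rewrite big1 // => /eqP; rewrite eq_sym oner_eq0.
    have [b0 nb0] := exb 0; have [b1 nb1] := exb 1.
    case: (Hrho a) => _ [psi [ent [c Hc]]].
    have K : forall y b, p' j b y != 0 -> forall i m k,
        ((wv psi b y k)^* * r j i m = (wv psi b y m)^* * r j i k).
      move=> y b nzb i m k.
      have := psd_ker (v := kv (wv psi b y) k m) (rd j).1 _ i.
      rewrite kv_mul => H; apply/eqP; rewrite -subr_eq0; apply/eqP; apply: H.
      apply: (key j a b y); first by rewrite mulf_neq0.
      rewrite /QQ (sig0E _ _ (@conj_sv C b y) Hc).
      by have := kv_orth (wv psi b y) k m; rewrite /wv => ->; rewrite mulr0 mul0r.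
    have hr : forall i j0, r j i j0 = (r j j0 i)^*.
      by apply/hermE; case: (rd j) => [[]].
    have r0 := alg hr (K 0 b0 nb0) (K 1 b1 nb1).
    have : \tr (r j) = 0.
      rewrite /mxtrace big1 // => i _; apply: r0.
      - by have [k hk] := N1 ent b0; exists k; rewrite wv0.
      - by have [k hk] := N2 ent (@sgn2 C b1); exists k; rewrite wv1.
      - move=> [lam Hl]; apply: (N3 (b:=b0) ent (@sgn2 C b1)); exists lam => i0.
        by rewrite -wv0 Hl wv1.
    by case: (rd j) => _ ->; move/eqP; rewrite oner_eq0.
  case: (pp j) => _ H; rewrite -[q j]mulr1 -(H 0) mulr_sumr big1 // => a _; exact: pa.
by move: qs; rewrite big1 // => /eqP; rewrite eq_sym oner_eq0.
Qed.
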